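(* Let $K,M,N_c,N_g$ be positive integers with $N_g\le N_c$, let $\rho_{tr}>0$, and for each $k\in\{0,\dots,K-1\}$ let $\boldsymbol{\Omega}_k\in\mathbb{R}^{M\times N_g}$ have non-negative entries, let $\phi_k\in\{0,\dots,N_c-1\}$, and let $\varrho_k(\cdot)$ be a real-valued function on the integers. Define $\bar{\boldsymbol{\Omega}}_{k}=[\boldsymbol{\Omega}_k\ \ \mathbf{0}_{M\times(N_c-N_g)}]$ and $\boldsymbol{\Omega}_{k'}^{\phi_{k'}-\phi_k}=\bar{\boldsymbol{\Omega}}_{k'}\boldsymbol{\Pi}_{N_c}^{\phi_{k'}-\phi_k}\mathbf{I}_{N_c\times N_g}$. For each integer $\Delta_\ell$ define the sum mean square error of channel prediction $$\epsilon^{CP}(\Delta_\ell)=\sum_{k=0}^{K-1}\sum_{i=0}^{M-1}\sum_{j=0}^{N_g-1}\left\{[\boldsymbol{\Omega}_k]_{i,j}-\varrho_k^2(\Delta_\ell)\frac{[\boldsymbol{\Omega}_k]_{i,j}^2}{\sum_{k'=0}^{K-1}[\boldsymbol{\Omega}_{k'}^{\phi_{k'}-\phi_k}]_{i,j}+\frac1{\rho_{tr}}}\right\}.$$ Then for every $\Delta_\ell$, $$\epsilon^{CP}(\Delta_\ell)\ge\varepsilon^{CP}(\Delta_\ell)=\sum_{k=0}^{K-1}\sum_{i=0}^{M-1}\sum_{j=0}^{N_g-1}\left\{[\boldsymbol{\Omega}_k]_{i,j}-\varrho_k^2(\Delta_\ell)\frac{[\boldsymbol{\Omega}_k]_{i,j}^2}{[\boldsymbol{\Omega}_k]_{i,j}+\frac1{\rho_{tr}}}\right\},$$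 and equality holds if, for all $k\neq k'$, $\left(\bar{\boldsymbol{\Omega}}_{k}\boldsymbol{\Pi}_{N_c}^{\phi_k}\right)\odot\left(\bar{\boldsymbol{\Omega}}_{k'}\boldsymbol{\Pi}_{N_c}^{\phi_{k'}}\right)=\mathbf{0}$.
   Context: Indices start at $0$. $\langle n\rangle_N$ denotes $n$ modulo $N$. $\boldsymbol{\Pi}_N^{n}=\begin{bmatrix}\mathbf{0}&\mathbf{I}_{N-\langle n\rangle_N}\\ \mathbf{I}_{\langle n\rangle_N}&\mathbf{0}\end{bmatrix}$; $\mathbf{I}_{N\times G}$ is the first $G$ columns of $\mathbf{I}_N$; $\odot$ is the Hadamard product. Interpretation: $\boldsymbol{\Omega}_k$ is the angle-delay channel power matrix of user $k$, $\phi_k$ its pilot phase shift, $\rho_{tr}$ the pilot SNR, $\varrho_k$ the channel temporal correlation function (in the paper $\varrho_k(\Delta)=J_0(2\pi\nu_kT_{sym}\Delta)$), and $\epsilon^{CP}(\Delta_\ell)$ the sum MSE of MMSE prediction of the channel $\Delta_\ell$ symbols after the pilot symbol. *)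

(* Defs.v *)
From HB Require Import structures.
From mathcomp Require Import all_boot all_order all_algebra.
Set Implicit Arguments. Unset Strict Implicit. Unset Printing Implicit Defensive.
Import Order.TTheory GRing.Theory Num.Theory.
Local Open Scope ring_scope.

(* Cyclic shift (permutation) matrix Pi_N^n =
     [ 0          I_{N-<n>_N} ]
     [ I_{<n>_N}  0           ]
   Entry (a,b) is 1 iff b = (a + <n>_N) mod N (indices from 0). *)
Definition Pi_mx (R : nzRingType) (N : nat) (n : int) : 'M[R]_N :=
  \matrix_(a < N, b < N)
     (((b : nat) == ((a + `|(n %% (N : int))%Z|%N) %% N)%N)%:R).

Definition Icols (R : nzRingType) (N G : nat) : 'M[R]_(N, G) :=
  \matrix_(a < N, b < G) (((a : nat) == (b : nat))%:R).

Definition pad_mx (R : nzRingType) (M Ng Nc : nat) (h : (Ng <= Nc)%N)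
  (A : 'M[R]_(M, Ng)) : 'M[R]_(M, Nc) :=
  castmx (erefl M, subnKC h) (row_mx A (0 : 'M[R]_(M, Nc - Ng))).

Definition hadamard (R : nzRingType) (m n : nat) (A B : 'M[R]_(m, n)) : 'M[R]_(m, n) :=
  map2_mx *%R A B.

Definition Omega_shift (R : nzRingType) (K M Ng Nc : nat) (h : (Ng <= Nc)%N)
  (Omega : 'I_K -> 'M[R]_(M, Ng)) (phi : 'I_K -> 'I_Nc) (k' k : 'I_K)
  : 'M[R]_(M, Ng) :=
  pad_mx h (Omega k') *m Pi_mx R Nc ((phi k' : int) - (phi k : int)) *m Icols R Nc Ng.

Definition eps_CP (R : realFieldType) (K M Ng Nc : nat) (h : (Ng <= Nc)%N)
  (rho_tr : R) (Omega : 'I_K -> 'M[R]_(M, Ng)) (phi : 'I_K -> 'I_Nc)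
  (varrho : 'I_K -> int -> R) (Delta : int) : R :=
  \sum_(k < K) \sum_(i < M) \sum_(j < Ng)
    (Omega k i j - (varrho k Delta) ^+ 2 * ((Omega k i j) ^+ 2 /
       (\sum_(k' < K) Omega_shift h Omega phi k' k i j + rho_tr^-1))).

Definition veps_CP (R : realFieldType) (K M Ng : nat)
  (rho_tr : R) (Omega : 'I_K -> 'M[R]_(M, Ng))
  (varrho : 'I_K -> int -> R) (Delta : int) : R :=
  \sum_(k < K) \sum_(i < M) \sum_(j < Ng)
    (Omega k i j - (varrho k Delta) ^+ 2 * ((Omega k i j) ^+ 2 /
       (Omega k i j + rho_tr^-1))).

(* Main.v *)
Require Import Defs.
From HB Require Import structures.
From mathcomp Require Import all_boot all_order all_algebra ring.
Import Order.TTheory GRing.Theory Num.Theory.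
Local Open Scope ring_scope.

Lemma modshift (N a j p q : nat) (hN : (0 < N)%N) :
  j = ((a + `|(((q:int) - (p:int)) %% (N:int))%Z|%N) %% N)%N ->
  ((j + p) %% N = (a + q) %% N)%N.
Proof. move=> ->. rewrite modnDml.
have hs : (`|(((q:int) - (p:int)) %% (N:int))%Z|%N : int) = (((q:int) - (p:int)) %% (N:int))%Z.
  by rewrite gez0_abs // modz_ge0 // eqz_nat -lt0n.
apply/eqP; rewrite -eqz_nat -!modz_nat !PoszD hs.
rewrite -addrA (addrC _ (Posz p)) addrA modzDmr.
by apply/eqP; congr (modz _ _); ring.
Qed.

Section S.
Variable R : realFieldType.

Lemma mulPiE m N (A : 'M[R]_(m, N)) n i b :
  (A *m Pi_mx R N n) i b =
  \sum_(a < N) A i a * ((b : nat) == ((a + `|(n %% (N : int))%Z|%N) %% N)%N)%:R.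
Proof. rewrite mxE; apply: eq_bigr => a _; by rewrite mxE. Qed.

Lemma sum_ge_term (I : finType) (F : I -> R) a :
  (forall x, 0 <= F x) -> F a <= \sum_x F x.
Proof.
move=> h; rewrite (bigD1 a) //= lerDl; apply: sumr_ge0 => x _; exact: h.
Qed.

Lemma pad_widen M Ng Nc (h : (Ng <= Nc)%N) (A : 'M[R]_(M, Ng)) i (j : 'I_Ng) :
  pad_mx h A i (widen_ord h j) = A i j.
Proof.
rewrite /pad_mx castmxE /=.
have -> : cast_ord (esym (subnKC h)) (widen_ord h j) = lshift (Nc - Ng) j.
  by apply: val_inj.
by rewrite row_mxEl cast_ord_id.
Qed.

Lemma pad_ge0 M Ng Nc (h : (Ng <= Nc)%N) (A : 'M[R]_(M, Ng)) i b :
  (forall i j, 0 <= A i j) -> 0 <= pad_mx h A i b.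
Proof.
move=> hA; rewrite /pad_mx castmxE /= cast_ord_id.
rewrite -[cast_ord _ b]splitK; case: (split _) => x.
  by rewrite row_mxEl.
by rewrite row_mxEr mxE.
Qed.

Lemma shiftE K M Ng Nc (h : (Ng <= Nc)%N) (Omega : 'I_K -> 'M[R]_(M, Ng)) phi k' k i j :
  Omega_shift h Omega phi k' k i j =
  \sum_(a < Nc) pad_mx h (Omega k') i a *
     (((widen_ord h j : nat) == ((a + `|(((phi k' : int) - (phi k : int)) %% (Nc : int))%Z|%N) %% Nc)%N)%:R).
Proof.
rewrite /Omega_shift mxE (bigD1 (widen_ord h j)) //= big1 ?addr0.
  by rewrite [Icols _ _ _ _ _]mxE /= eqxx mulr1 mulPiE.
move=> b hb; rewrite [Icols _ _ _ _ _]mxE /=.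
have -> : ((b : nat) == j) = false.
  by apply/negbTE; apply: contra hb => /eqP e; apply/eqP/val_inj.
by rewrite mulr0.
Qed.

Lemma shift_self K M Ng Nc (h : (Ng <= Nc)%N) (Omega : 'I_K -> 'M[R]_(M, Ng)) phi k i j :
  Omega_shift h Omega phi k k i j = Omega k i j.
Proof.
rewrite shiftE subrr mod0z /= (bigD1 (widen_ord h j)) //= big1 ?addr0.
  rewrite addn0 modn_small /=; last exact: leq_trans (ltn_ord j) h.
  by rewrite eqxx mulr1 pad_widen.
move=> b hb; rewrite addn0 modn_small //.
have -> : ((widen_ord h j : nat) == b) = false.
  by apply/negbTE; apply: contra hb => /eqP e; apply/eqP/val_inj.
by rewrite mulr0.
Qed.

Lemma shift_ge0 K M Ng Nc (h : (Ng <= Nc)%N) (Omega : 'I_K -> 'M[R]_(M, Ng)) phi k' k i j :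
  (forall k i j, 0 <= Omega k i j) -> 0 <= Omega_shift h Omega phi k' k i j.
Proof.
move=> hO; rewrite shiftE; apply: sumr_ge0 => a _.
by apply: mulr_ge0; [apply: pad_ge0 | rewrite ler0n].
Qed.

Lemma absmod (p N : nat) : `|((p : int) %% (N : int))%Z|%N = (p %% N)%N.
Proof. by rewrite modz_nat. Qed.

Lemma hadE m n (A B : 'M[R]_(m, n)) i j : hadamard A B i j = A i j * B i j.
Proof. by rewrite mxE. Qed.

Lemma cross_zero K M Ng Nc (hNc : (0 < Nc)%N) (h : (Ng <= Nc)%N)
  (Omega : 'I_K -> 'M[R]_(M, Ng)) (hO : forall k i j, 0 <= Omega k i j)
  (phi : 'I_K -> 'I_Nc) k k' i j :
  hadamard (pad_mx h (Omega k) *m Pi_mx R Nc (phi k : int))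
           (pad_mx h (Omega k') *m Pi_mx R Nc (phi k' : int)) = 0 ->
  Omega k i j * Omega_shift h Omega phi k' k i j = 0.
Proof.
move=> H; rewrite shiftE mulr_sumr big1 // => a _.
case: eqP => e; last by rewrite !mulr0.
rewrite mulr1.
pose b := Ordinal (ltn_pmod (j + phi k) hNc).
have Hb : (pad_mx h (Omega k) *m Pi_mx R Nc (phi k : int)) i b *
     (pad_mx h (Omega k') *m Pi_mx R Nc (phi k' : int)) i b = 0.
  by rewrite -hadE H mxE.
have hpos : forall (kk : 'I_K) (n : int) (c : 'I_Nc),
    0 <= (pad_mx h (Omega kk) *m Pi_mx R Nc n) i c.
  move=> kk n c; rewrite mulPiE; apply: sumr_ge0 => x _.
  by apply: mulr_ge0; [apply: pad_ge0 | rewrite ler0n].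
have hX : Omega k i j <= (pad_mx h (Omega k) *m Pi_mx R Nc (phi k : int)) i b.
  rewrite mulPiE.
  have := @sum_ge_term _ (fun x : 'I_Nc => pad_mx h (Omega k) i x *
     ((b : nat) == ((x + `|((phi k : int) %% (Nc : int))%Z|%N) %% Nc)%N)%:R)
     (widen_ord h j).
  rewrite /= absmod modnDmr eqxx mulr1 pad_widen; apply => x.
  by apply: mulr_ge0; [apply: pad_ge0 | rewrite ler0n].
have hY : pad_mx h (Omega k') i a <= (pad_mx h (Omega k') *m Pi_mx R Nc (phi k' : int)) i b.
  rewrite mulPiE.
  have := @sum_ge_term _ (fun x : 'I_Nc => pad_mx h (Omega k') i x *
     ((b : nat) == ((x + `|((phi k' : int) %% (Nc : int))%Z|%N) %% Nc)%N)%:R) a.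
  rewrite /= absmod modnDmr (@modshift Nc a j (phi k) (phi k') hNc e) eqxx mulr1; apply => x.
  by apply: mulr_ge0; [apply: pad_ge0 | rewrite ler0n].
apply/eqP; rewrite eq_le; apply/andP; split.
  rewrite -Hb; apply: ler_pM => //; first [exact: hO | apply: pad_ge0; exact: hO].
by apply: mulr_ge0; first [exact: hO | apply: pad_ge0; exact: hO].
Qed.

End S.

Theorem proposition4 (R : realFieldType) (K M Nc Ng : nat)
  (hK : (0 < K)%N) (hM : (0 < M)%N) (hNc : (0 < Nc)%N) (hNg0 : (0 < Ng)%N)
  (hNg : (Ng <= Nc)%N) (rho_tr : R) (hrho : 0 < rho_tr)
  (Omega : 'I_K -> 'M[R]_(M, Ng))
  (hOmega : forall k i j, 0 <= Omega k i j)
  (phi : 'I_K -> 'I_Nc) (varrho : 'I_K -> int -> R) :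
  (forall Delta : int,
     veps_CP rho_tr Omega varrho Delta <= eps_CP hNg rho_tr Omega phi varrho Delta) /\
  ((forall k k' : 'I_K, k != k' ->
      hadamard (pad_mx hNg (Omega k) *m Pi_mx R Nc (phi k : int))
               (pad_mx hNg (Omega k') *m Pi_mx R Nc (phi k' : int)) = 0) ->
   forall Delta : int,
     eps_CP hNg rho_tr Omega phi varrho Delta = veps_CP rho_tr Omega varrho Delta).
Proof.
have hc : 0 < rho_tr^-1 by rewrite invr_gt0.
have hS : forall k i j, Omega k i j <= \sum_(k' < K) Omega_shift hNg Omega phi k' k i j.
  move=> k i j; rewrite (bigD1 k) //= shift_self lerDl.
  by apply: sumr_ge0 => x _; apply: shift_ge0.
split.
  move=> Delta; rewrite /veps_CP /eps_CP.
  apply: ler_sum => k _; apply: ler_sum => i _; apply: ler_sum => j _.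
  rewrite lerB // ler_wpM2l ?sqr_ge0 // ler_wpM2l ?exprn_ge0 //.
  rewrite lef_pV2 ?posrE ?lerD2r //.
    by apply: ltr_wpDl => //; apply: le_trans (hS k i j).
  by apply: ltr_wpDl.
move=> H Delta; rewrite /veps_CP /eps_CP.
apply: eq_bigr => k _; apply: eq_bigr => i _; apply: eq_bigr => j _.
have [O0|On0] := eqVneq (Omega k i j) 0.
  by rewrite O0 expr0n /= !mul0r.
congr (_ - _ * (_ / (_ + _))).
rewrite (bigD1 k) //= shift_self big1 ?addr0 // => k' hk'.
have := @cross_zero R K M Ng Nc hNc hNg Omega hOmega phi k k' i j (H k k' ltac:(by rewrite eq_sym)).
by move/eqP; rewrite mulf_eq0 (negbTE On0) /= => /eqP.
Qed.
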